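(* Let $w\in[k]^n$ and let $m$ be a positive integer. If $\mathrm{LT}(w)\geq m$, then $w$ contains regular twins of length $m$.
   Context: $[k]=\{1,\dots,k\}$; $w[i]$ is the $i$-th letter of $w$. Two subsequences of $w$ are twins if they are equal as words and use disjoint sets of positions of $w$; $\mathrm{LT}(w)$ is the maximum length of twins in $w$. Twins $(w_1,w_2)$ are monotone if, for every $i$, the $i$-th letter of $w_1$ occurs in $w$ before the $i$-th letter of $w_2$. For monotone twins define $R=R(w_1,w_2,w)\in\{0,1,2\}^n$ by $R[i]=0$ if position $i$ is in neither twin, $R[i]=1$ if it is in $w_1$, $R[i]=2$ if it is in $w_2$. Monotone twins $(w_1,w_2)$ are regular if (a) there are no $i<j$ with $R[i]=2$, $R[j]=1$, $R[k']=0$ for all $i<k'<j$, and $w[i]=w[j]$; and (b) there are no $i<j$ with $R[i]\in\{1,2\}$, $R[j]=0$, $R[k']=0$ for all $i<k'<j$, and $w[i]=w[j]$. *)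

(* Defs.v *)
From mathcomp Require Import all_boot.
Set Implicit Arguments. Unset Strict Implicit. Unset Printing Implicit Defensive.

(* A word w in [k]^n is an n-tuple of letters in 'I_k (letters 0..k-1 stand
   for 1..k); positions are 'I_n (0-based).  A subsequence of w is given by
   its set S of positions; the word it spells is the letters at positions of
   S read in increasing order. *)

Section Twins.
Variables (n k : nat) (w : n.-tuple 'I_k).

Definition subword (S : {set 'I_n}) : seq 'I_k :=
  [seq tnth w i | i <- enum S].

Definition twins (S T : {set 'I_n}) : bool :=
  [disjoint S & T] && (subword S == subword T).

Definition LT : nat :=
  \max_(S : {set 'I_n}) \max_(T : {set 'I_n} | twins S T) #|S|.

Definition monotone (S T : {set 'I_n}) : bool :=
  [forall i : 'I_n, (i < #|S|) ==>
     (nth 0 [seq val x | x <- enum S] i < nth 0 [seq val x | x <- enum T] i)].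

Definition Rfun (S T : {set 'I_n}) (i : 'I_n) : nat :=
  if i \in S then 1 else if i \in T then 2 else 0.

Definition regular (S T : {set 'I_n}) : bool :=
  monotone S T &&
  [forall i : 'I_n, forall j : 'I_n,
     ~~ [&& i < j, Rfun S T i == 2, Rfun S T j == 1,
           [forall k' : 'I_n, (i < k' < j) ==> (Rfun S T k' == 0)]
         & tnth w i == tnth w j]] &&
  [forall i : 'I_n, forall j : 'I_n,
     ~~ [&& i < j, (Rfun S T i == 1) || (Rfun S T i == 2), Rfun S T j == 0,
           [forall k' : 'I_n, (i < k' < j) ==> (Rfun S T k' == 0)]
         & tnth w i == tnth w j]].

End Twins.

(* Main.v *)
Require Import Defs.
From mathcomp Require Import all_boot zify.
Set Implicit Arguments. Unset Strict Implicit.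

Section Moves.
Variables (n : nat) (wn : nat -> nat).

Definition good (P Q : seq nat) :=
  [/\ sorted ltn P && sorted ltn Q, all (fun x => x < n) P && all (fun x => x < n) Q,
      map wn P = map wn Q & forall x, x \in P -> x \in Q -> False].
Definition mono (P Q : seq nat) := forall t, t < size P -> nth 0 P t < nth 0 Q t.
Definition phi (P Q : seq nat) := sumn P + 2 * sumn Q.
Definition rep (a b x : nat) := if x == a then b else x.

Lemma good_size P Q : good P Q -> size P = size Q.
Proof. by case=> _ _ e _; rewrite -(size_map wn P) e size_map. Qed.

Lemma sumn_rep P a b : uniq P -> a \in P -> sumn (map (rep a b) P) + a = sumn P + b.
Proof.
elim: P => //= x P IH /andP [xP uP]; rewrite inE; case: eqP => [e _ | ne aP]; first subst x.
  have -> : map (rep a b) P = P.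
    apply: map_id_in => y yP /=; rewrite /rep; case: eqP => // ey.
    by subst; rewrite yP in xP.
  rewrite /rep eqxx; lia.
rewrite {1}/rep.
have -> : (x == a) = false by apply/eqP => e; apply: ne.
have := IH uP aP; lia.
Qed.

Lemma sumn_le P : all (fun x => x < n) P -> sumn P <= n * size P.
Proof.
elim: P => //= x P IH /andP [xn aP]; have := IH aP; rewrite mulnS; lia.
Qed.

Lemma rep_ok P a b : sorted ltn P -> all (fun x => x < n) P -> a \in P -> b < n ->
  (forall x, x \in P -> x != a -> ((x < a) = (x < b)) /\ ((a < x) = (b < x))) ->
  wn a = wn b ->
  [/\ sorted ltn (map (rep a b) P), all (fun x => x < n) (map (rep a b) P),
      map wn (map (rep a b) P) = map wn P & sumn (map (rep a b) P) + a = sumn P + b].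
Proof.
move=> sP aP aIn bn H wab; split.
- rewrite sorted_map; apply: (@sub_in_sorted _ (mem P) ltn); last exact: sP; last by apply/allP.
  move=> x y xP yP /= lt; rewrite /rep.
  case: (eqVneq x a) => [ex|xa]; case: (eqVneq y a) => [ey|ya].
  + subst; by rewrite ltnn in lt.
  + subst; by have [_ <-] := H y yP ya.
  + subst; by have [<- _] := H x xP xa.
  + exact: lt.
- rewrite all_map; apply/allP => x xP /=; rewrite /rep; case: eqP => // _.
  exact: (allP aP).
- rewrite -map_comp; apply: eq_map => x /=; rewrite /rep; case: eqP => // ->.
  by rewrite wab.
- apply: sumn_rep => //; exact: (sorted_uniq ltn_trans ltnn).
Qed.

Lemma rep_ge a b x : a <= b -> x <= rep a b x.
Proof. by rewrite /rep; case: eqP => // ->. Qed.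
Lemma rep_le a b x : b <= a -> rep a b x <= x.
Proof. by rewrite /rep; case: eqP => // ->. Qed.

Lemma ord_aux x i j : x != i -> x != j -> ~~ (i < x < j) -> i < j ->
  ((x < i) = (x < j)) /\ ((i < x) = (j < x)).
Proof. move=> *; split; lia. Qed.
Lemma ord_aux2 x i j : x != i -> x != j -> ~~ (i < x < j) -> i < j ->
  ((x < j) = (x < i)) /\ ((j < x) = (i < x)).
Proof. move=> *; split; lia. Qed.

Definition better P Q := exists P' Q',
  [/\ good P' Q', mono P' Q', size P' = size P & phi P Q < phi P' Q'].

Lemma moveBP P Q i j : good P Q -> mono P Q -> i < j < n -> i \in P ->
  j \notin P -> j \notin Q ->
  (forall x, i < x < j -> x \notin P /\ x \notin Q) -> wn i = wn j -> better P Q.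
Proof.
move=> gPQ; have szPQ := good_size gPQ; move: gPQ => [/andP [sP sQ] /andP [aP aQ] eW dj] mo /andP [ij jn] iP jP jQ btw wij.
have [s1 a1 e1 sm1] : [/\ sorted ltn (map (rep i j) P), all (fun x => x < n) (map (rep i j) P),
      map wn (map (rep i j) P) = map wn P & sumn (map (rep i j) P) + i = sumn P + j].
  apply: rep_ok => // x xP xi.
  have xj : x != j by apply: contraNneq jP => <-.
  have : ~~ (i < x < j) by apply/negP => /btw [/negP]; rewrite xP.
  by move=> h; apply: ord_aux.
exists (map (rep i j) P), Q; split.
- split => //; rewrite ?e1 ?e2 ?s1 ?a1 ?s2 ?a2 ?sP ?sQ ?aP ?aQ //.
  move=> x /mapP [y yP ->]; rewrite /rep; case: eqP => [_ | _ yQ]; first by rewrite (negbTE jQ).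
  exact: dj yP yQ.
- move=> t; rewrite size_map => tP; rewrite (nth_map 0) //.
  have := mo t tP; rewrite /rep; case: eqP => // ->.
  have qQ : nth 0 Q t \in Q by apply: mem_nth; rewrite -szPQ.
  have qj : nth 0 Q t != j by apply: contraNneq jQ => <-.
  move=> iq; have : ~~ (i < nth 0 Q t < j) by apply/negP => /btw [_ /negP]; rewrite qQ.
  clear -iq qj ij; lia.
- by rewrite size_map.
- rewrite /phi; clear -sm1 ij; lia.
Qed.

Lemma moveBQ P Q i j : good P Q -> mono P Q -> i < j < n -> i \in Q ->
  j \notin P -> j \notin Q ->
  (forall x, i < x < j -> x \notin P /\ x \notin Q) -> wn i = wn j -> better P Q.
Proof.
move=> gPQ; have szPQ := good_size gPQ; move: gPQ => [/andP [sP sQ] /andP [aP aQ] eW dj] mo /andP [ij jn] iQ jP jQ btw wij.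
have [s1 a1 e1 sm1] : [/\ sorted ltn (map (rep i j) Q), all (fun x => x < n) (map (rep i j) Q),
      map wn (map (rep i j) Q) = map wn Q & sumn (map (rep i j) Q) + i = sumn Q + j].
  apply: rep_ok => // x xQ xi.
  have xj : x != j by apply: contraNneq jQ => <-.
  have : ~~ (i < x < j) by apply/negP => /btw [_ /negP]; rewrite xQ.
  by move=> h; apply: ord_aux.
exists P, (map (rep i j) Q); split.
- split => //; rewrite ?e1 ?e2 ?s1 ?a1 ?s2 ?a2 ?sP ?sQ ?aP ?aQ //.
  move=> x xP /mapP [y yQ ey]; move: ey; rewrite /rep; case: eqP => [_ ex | _ ex].
    by subst; rewrite xP in jP.
  subst; exact: dj xP yQ.
- move=> t tP; rewrite (nth_map 0) -?szPQ //.
  have := mo t tP; have := @rep_ge i j (nth 0 Q t) (ltnW ij); clear; lia.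
- by [].
- rewrite /phi; clear -sm1 ij; lia.
Qed.

Lemma moveA P Q i j : good P Q -> mono P Q -> i < j < n -> i \in Q -> j \in P ->
  (forall x, i < x < j -> x \notin P /\ x \notin Q) -> wn i = wn j -> better P Q.
Proof.
move=> gPQ; have szPQ := good_size gPQ; move: gPQ => [/andP [sP sQ] /andP [aP aQ] eW dj] mo /andP [ij jn] iQ jP btw wij.
have iP : i \notin P by apply/negP => iP; exact: dj iP iQ.
have jQ : j \notin Q by apply/negP => jQ; exact: dj jP jQ.
have [s1 a1 e1 sm1] : [/\ sorted ltn (map (rep j i) P), all (fun x => x < n) (map (rep j i) P),
      map wn (map (rep j i) P) = map wn P & sumn (map (rep j i) P) + j = sumn P + i].
  apply: rep_ok => //; first by apply: ltn_trans jn.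
  move=> x xP xj.
  have xi : x != i by apply: contraNneq iP => <-.
  have : ~~ (i < x < j) by apply/negP => /btw [/negP]; rewrite xP.
  by move=> h; apply: ord_aux2.
have [s2 a2 e2 sm2] : [/\ sorted ltn (map (rep i j) Q), all (fun x => x < n) (map (rep i j) Q),
      map wn (map (rep i j) Q) = map wn Q & sumn (map (rep i j) Q) + i = sumn Q + j].
  apply: rep_ok => // x xQ xi.
  have xj : x != j by apply: contraNneq jQ => <-.
  have : ~~ (i < x < j) by apply/negP => /btw [_ /negP]; rewrite xQ.
  by move=> h; apply: ord_aux.
exists (map (rep j i) P), (map (rep i j) Q); split.
- split => //; rewrite ?e1 ?e2 ?s1 ?a1 ?s2 ?a2 ?sP ?sQ ?aP ?aQ //.
  move=> x /mapP [y yP ->] /mapP [z zQ]; rewrite /rep.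
  case: (eqVneq y j) => [ey|yj]; case: (eqVneq z i) => [ez|zi] /= e.
  + by rewrite e ltnn in ij.
  + by rewrite e eqxx in zi.
  + by rewrite e eqxx in yj.
  + by subst; exact: dj yP zQ.
- move=> t; rewrite size_map => tP; rewrite !(nth_map 0) -?szPQ //.
  have := mo t tP; have := @rep_ge i j (nth 0 Q t) (ltnW ij).
  have := @rep_le j i (nth 0 P t) (ltnW ij); clear; lia.
- by rewrite size_map.
- rewrite /phi; clear -sm1 sm2 ij; lia.
Qed.


Lemma good_take P Q m : good P Q -> good (take m P) (take m Q).
Proof.
move=> [/andP [sP sQ] /andP [aP aQ] eW dj]; split.
- by rewrite !(subseq_sorted ltn_trans (take_subseq _ _)).
- by apply/andP; split; apply/allP => x /mem_take x_in; [exact: (allP aP) | exact: (allP aQ)].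
- by rewrite !map_take eW.
- by move=> x /mem_take xP /mem_take xQ; exact: dj xP xQ.
Qed.

Lemma min_max_aux a b c d : minn a b = maxn c d -> a != c -> b != d -> a != d -> b != c -> False.
Proof. move=> *; lia. Qed.

Lemma good_mono P Q : good P Q -> exists P' Q', [/\ good P' Q', mono P' Q' & size P' = size P].
Proof.
move=> gPQ; have szPQ := good_size gPQ; move: gPQ => [/andP [sP sQ] /andP [aP aQ] eW dj].
set m := size P.
pose p t := nth 0 P t; pose q t := nth 0 Q t.
have pQ t s : t < m -> s < m -> p t != q s.
  move=> tm sm; apply/eqP => e; apply: (dj (p t)); first exact: mem_nth.
  by rewrite e; apply: mem_nth; rewrite -szPQ.
have uP := sorted_uniq ltn_trans ltnn sP.
have uQ := sorted_uniq ltn_trans ltnn sQ.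
have injp t s : t < m -> s < m -> p t = q s -> False by move=> tm sm e; move: (pQ t s tm sm); rewrite e eqxx.
have injP t s : t < m -> s < m -> p t = p s -> t = s.
  by move=> tm sm e; apply/eqP; rewrite -(nth_uniq 0 tm sm uP); apply/eqP.
have injQ t s : t < m -> s < m -> q t = q s -> t = s.
  by move=> tm sm e; apply/eqP; rewrite -(nth_uniq 0 _ _ uQ) -?szPQ //; apply/eqP.
have wpq t : t < m -> wn (p t) = wn (q t).
  move=> tm; have := congr1 (fun s => nth 0 s t) eW; rewrite /= !(nth_map 0) -?szPQ //.
have pn t : t < m -> p t < n by move=> tm; apply: (allP aP); exact: mem_nth.
have qn t : t < m -> q t < n by move=> tm; apply: (allP aQ); rewrite mem_nth // -szPQ.
have sp t : t.+1 < m -> p t < p t.+1 by move=> tm; apply: (sortedP 0 sP).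
have sq t : t.+1 < m -> q t < q t.+1 by move=> tm; apply: (sortedP 0 sQ); rewrite -szPQ.
exists (mkseq (fun t => minn (p t) (q t)) m), (mkseq (fun t => maxn (p t) (q t)) m); split; last by rewrite size_mkseq.
- split.
  + apply/andP; split; apply/(sortedP 0) => t; rewrite size_mkseq => tm;
      rewrite !nth_mkseq ?(ltnW tm) //; have := sp t tm; have := sq t tm; clear; lia.
  + apply/andP; split; apply/allP => x /(nthP 0) [t]; rewrite size_mkseq => tm;
      rewrite nth_mkseq // => <-; have := pn t tm; have := qn t tm; clear; lia.
  + apply: (eq_from_nth (x0 := 0)); first by rewrite !size_map ?size_mkseq ?size_iota.
    rewrite !size_map ?size_mkseq ?size_iota => t tm.
    rewrite /mkseq -!map_comp !(nth_map 0) ?size_iota // !nth_iota //=.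
    have := wpq t tm; have [h|h] := leqP (p t) (q t).
      by [].
    by move=> ->.
  + move=> x /(nthP 0) [t]; rewrite size_mkseq => tm; rewrite nth_mkseq // => <-.
    move=> /(nthP 0) [s]; rewrite size_mkseq => sm; rewrite nth_mkseq // => e.
    have d1 := pQ t s tm sm; have d2 := pQ s t sm tm.
    case: (eqVneq t s) => [ets|nts].
      subst s; move: e d1; clear; lia.
    have d3 : p t != p s by apply/eqP => /(injP _ _ tm sm) ets; rewrite ets eqxx in nts.
    have d4 : q t != q s by apply/eqP => /(injQ _ _ tm sm) ets; rewrite ets eqxx in nts.
    apply: (min_max_aux (esym e)) => //; by rewrite eq_sym.
- move=> t; rewrite size_mkseq => tm; rewrite !nth_mkseq //.
  have := pQ t t tm tm; clear; lia.
Qed.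

End Moves.

Section SetLevel.
Variables (n k : nat) (w : n.-tuple 'I_k).

Definition wnat (i : nat) : nat := nth 0 (map val w) i.
Definition setOf (P : seq nat) : {set 'I_n} := [set x : 'I_n | val x \in P].

Lemma wnatE (x : 'I_n) : wnat x = val (tnth w x).
Proof. by rewrite /wnat (nth_map (tnth w x)) ?size_tuple // -tnth_nth. Qed.

Lemma enum_sorted (A : {set 'I_n}) : sorted ltn (map val (enum A)).
Proof.
rewrite -[enum _](eq_filter (mem_enum _)).
rewrite -(eq_filter (mem_map val_inj _)) -filter_map.
by rewrite (sorted_filter ltn_trans) // unlock val_ord_enum iota_ltn_sorted.
Qed.

Lemma enum_all (A : {set 'I_n}) : all (fun x => x < n) (map val (enum A)).
Proof. by apply/allP => x /mapP [y _ ->]; exact: ltn_ord. Qed.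

Lemma enum_setP P : sorted ltn P -> all (fun x => x < n) P ->
  map val (enum (setOf P)) = P.
Proof.
move=> sP aP; apply: (irr_sorted_eq ltn_trans ltnn) => //; first exact: enum_sorted.
move=> x; apply/mapP/idP => [[y] | xP].
  by rewrite mem_enum inE => yP ->.
have xn := allP aP x xP; exists (Ordinal xn) => //.
by rewrite mem_enum inE.
Qed.

Lemma subword_val (A : {set 'I_n}) : map val (subword w A) = map wnat (map val (enum A)).
Proof.
rewrite /subword -!map_comp; apply: eq_map => x /=; by rewrite wnatE.
Qed.

Lemma twins_good S T : twins w S T -> good n wnat (map val (enum S)) (map val (enum T)).
Proof.
move=> /andP [dST /eqP eST]; split.
- by rewrite !enum_sorted.
- by rewrite !enum_all.
- by rewrite -!subword_val eST.
- move=> x /mapP [y yS ->] /mapP [z zT e]; move/val_inj: e => e; subst z.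
  rewrite mem_enum in yS; rewrite mem_enum in zT.
  by rewrite (disjointFr dST yS) in zT.
Qed.

Lemma good_twins P Q : good n wnat P Q ->
  [/\ twins w (setOf P) (setOf Q), map val (enum (setOf P)) = P & map val (enum (setOf Q)) = Q].
Proof.
move=> [/andP [sP sQ] /andP [aP aQ] eW dj].
have eP := enum_setP sP aP; have eQ := enum_setP sQ aQ.
split => //; apply/andP; split.
- rewrite -setI_eq0; apply/eqP/setP => x; rewrite !inE.
  by apply/negP => /andP [xP xQ]; exact: dj xP xQ.
- by apply/eqP; apply: (inj_map val_inj); rewrite !subword_val eP eQ.
Qed.

Lemma exists_big m : 0 < m -> m <= LT w -> exists S T, twins w S T /\ m <= #|S|.
Proof.
move=> m0 mLT.
case: (boolP [exists S, exists T, twins w S T && (m <= #|S|)]).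
  by move=> /existsP [S /existsP [T /andP [h1 h2]]]; exists S, T.
move=> H; exfalso.
have : LT w <= m.-1.
  apply/bigmax_leqP => S _; apply/bigmax_leqP => T tw.
  move: H; rewrite negb_exists => /forallP /(_ S); rewrite negb_exists => /forallP /(_ T).
  rewrite tw /= -ltnNge => h; move: h m0; clear; lia.
move: mLT m0; clear; lia.
Qed.

Lemma main m d : forall P Q, good n wnat P Q -> mono P Q -> size P = m ->
  3 * n * m - phi P Q < d ->
  exists S T : {set 'I_n}, [/\ twins w S T, regular w S T & #|S| = m].
Proof.
elim: d => // d IH P Q gPQ mo sz mu.
have szPQ := good_size gPQ.
have [tw eP eQ] := good_twins gPQ.
have monoST : monotone (setOf P) (setOf Q).
  apply/forallP => i; apply/implyP; rewrite cardE -(size_map val) eP eQ => ilt.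
  exact: mo.
have cardS : #|setOf P| = m by rewrite cardE -(size_map val) eP.
case: (boolP (regular w (setOf P) (setOf Q))) => reg; first by exists (setOf P), (setOf Q).
have bet : better n wnat P Q -> exists S T : {set 'I_n}, [/\ twins w S T, regular w S T & #|S| = m].
  move=> [P' [Q' [g' mo' sz' lt']]].
  apply: (IH P' Q') => //; first by rewrite sz'.
  have szPQ' := good_size g'.
  case: g' => _ /andP [aP' aQ'] _ _.
  have := sumn_le aP'; have := sumn_le aQ'; rewrite -szPQ' sz' sz.
  move: mu lt'; rewrite /phi; clear; lia.
apply: bet.
have [_ /andP [aP aQ] _ dj] := gPQ.
have btw_of (i j : 'I_n) : [forall k' : 'I_n, (i < k' < j) ==> (Rfun (setOf P) (setOf Q) k' == 0)] ->
    forall x, i < x < j -> x \notin P /\ x \notin Q.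
  move=> /forallP H x /andP [ix xj].
  have xn : x < n by apply: ltn_trans xj _.
  have := H (Ordinal xn); rewrite /= ix xj /= /Rfun !inE /=.
  by case: (x \in P) => //; case: (x \in Q).
have wij (i j : 'I_n) : tnth w i == tnth w j -> wnat i = wnat j.
  by move/eqP => e; rewrite !wnatE e.
move: reg; rewrite /regular monoST /= negb_and => /orP [] /forallPn [i /forallPn [j /negPn H]]; case/and5P: H => ij Ri Rj btw wi.
- move: Ri Rj; rewrite /Rfun !inE.
  case: (boolP (val i \in P)) => // iP; case: (boolP (val i \in Q)) => // iQ _.
  case: (boolP (val j \in P)) => jP; last by case: (val j \in Q).
  move=> _; apply: (moveA gPQ mo _ iQ jP (btw_of _ _ btw) (wij _ _ wi)).
  by rewrite ij ltn_ord.
- move: Ri Rj; rewrite /Rfun !inE.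
  case: (boolP (val j \in P)) => jP; first by move=> _.
  case: (boolP (val j \in Q)) => jQ; first by move=> _.
  move=> Ri _; have ijn : i < j < n by rewrite ij ltn_ord.
  case: (boolP (val i \in P)) => iP.
    exact: (moveBP gPQ mo ijn iP jP jQ (btw_of _ _ btw) (wij _ _ wi)).
  case: (boolP (val i \in Q)) => iQ; last by move: Ri; rewrite (negbTE iP) (negbTE iQ).
  exact: (moveBQ gPQ mo ijn iQ jP jQ (btw_of _ _ btw) (wij _ _ wi)).
Qed.

End SetLevel.

Theorem lemma18 (n k : nat) (w : n.-tuple 'I_k) (m : nat) :
  0 < m -> m <= LT w ->
  exists S T : {set 'I_n},
    [/\ twins w S T, regular w S T & #|S| = m].
Proof.
move=> m0 mLT.
have [S0 [T0 [tw mS]]] := exists_big m0 mLT.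
have g0 := twins_good tw.
have g1 := good_take m g0.
have [P [Q [g mo sz]]] := good_mono g1.
have szP : size P = m.
  by rewrite sz size_take size_map -cardE; move: mS; case: ltngtP => //; lia.
exact: (@main n k w m (3 * n * m - phi P Q).+1 P Q g mo szP (ltnSn _)).
Qed.
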